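(* The system (MNW) has a seventh-order generalized symmetry with characteristic $Q_{1,1}=\mathcal{R}(Q_1)=(Q^1_{1,1},Q^2_{1,1})^T$, where $Q_1=(u_1,v_1)^T$ and $Q_{1,1}^1= u_7-\frac{42}{5}uu_5+\frac{126}{5}u_1^3-\frac{126}{5}u_1v_1^2-\frac{147}{5}u_1u_4-\frac{1386}{25}v_2u_1v+\frac{2268}{25}uu_1u_2+\frac{1512}{125}uv^2u_1-\frac{2016}{125}u^3u_1-\frac{252}{125}v^3u_1+\frac{1512}{125}v_1vu^2+\frac{504}{25}u^2u_3-\frac{756}{25}uvv_3-\frac{756}{125}v^2uv_1-\frac{756}{25}uv_1v_2+\frac{252}{25}v^2v_3+\frac{84}{5}v_2v_3+21v_1v_4+\frac{84}{5}vv_5-\frac{252}{5}u_2u_3-\frac{252}{25}v^2u_3+\frac{126}{25}v_1^3-\frac{1134}{25}v_1u_2v+\frac{756}{25}vv_1v_2$, $Q_{1,1}^2= -27v_7-\frac{756}{25}v_2u_1v+\frac{252}{25}v^2v_3+\frac{126}{25}v_1^3+189v_4u_1+\frac{483}{5}u_4v_1-\frac{378}{5}u_1^2v_1+\frac{1386}{5}u_2v_3-\frac{756}{5}v_2v_3-\frac{252}{125}v^3v_1-\frac{756}{25}uvu_3-\frac{756}{25}v_1u_2v+\frac{1512}{25}uv_1v_2+\frac{882}{25}vv_1v_2-\frac{1134}{25}u_1vu_2+\frac{378}{25}u_1v_1^2+\frac{378}{5}v_5u-\frac{252}{25}v^2u_3-\frac{3024}{25}u_2uv_1-\frac{378}{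5}v_1v_4-\frac{4536}{25}v_2u_1u+\frac{1008}{125}u^3v_1+\frac{756}{125}uv^2u_1-\frac{1512}{25}u^2v_3+\frac{1134}{5}u_3v_2+\frac{1512}{125}u^2u_1v+\frac{84}{5}u_5v$.
   Context: (MNW) is the system $u_t = -\tfrac{5}{3}u_5-10vv_3-15v_1v_2+10uu_3+25u_1u_2-6v^2v_1+6v^2u_1+12uvv_1-12u^2u_1$, $v_t = 15v_5+30v_1v_2-30v_3u-45v_2u_1-35v_1u_2-10vu_3-6v^2v_1+6v^2u_1+12u^2v_1+12vuu_1$, with $u_i=\partial^i u/\partial x^i$, $v_j=\partial^j v/\partial x^j$. A characteristic $Q$ defines a generalized symmetry if $D_tQ=F'[Q]$ on solutions, $F$ the right-hand side of (MNW) and $F'$ its Fréchet derivative. $D_x$ is the total $x$-derivative, $D_x^{-1}$ its formal inverse; $aD_x^{-1}\circ b$ acts as $f\mapsto aD_x^{-1}(bf)$. $\mathcal{R}=\mathcal{P}\circ\mathcal{S}$ with $$\mathcal{P}=\begin{pmatrix} D_x^3-\frac{6}{5}uD_x-\frac{3}{5}u_1 & -\frac{6}{5}vD_x-\frac{3}{5}v_1\\ -\frac{6}{5}vD_x-\frac{3}{5}v_1 & 3D_x^3-(\frac{18}{5}u+\frac{12}{5}v)D_x-\frac{9}{5}u_1-\frac{6}{5}v_1 \end{pmatrix},$$ $$\mathcal{S}=\begin{pmatrix} S_{11}+\frac{6}{5}\gamma_{21}D_x^{-1}\circ \gamma_{11} +\frac{6}{5}D_x^{-1}\circ \gamma_{21}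 & S_{12}+\frac{6}{5}\gamma_{21}D_x^{-1}\circ \gamma_{12} +\frac{6}{5}D_x^{-1}\circ \gamma_{22}\\ S_{21}+\frac{6}{5}\gamma_{22}D_x^{-1}\circ \gamma_{11} & S_{22}+\frac{6}{5}\gamma_{22}D_x^{-1}\circ \gamma_{12} \end{pmatrix},$$ where $S_{11}=-D_x^3+6uD_x+3u_1$, $S_{12}=-6vD_x+3v_1$, $S_{21}=-6vD_x-9v_1$, $S_{22}=9D_x^3-(\frac{54}{5}u-\frac{36}{5}v)D_x-\frac{27}{5}u_1+\frac{18}{5}v_1$, $\gamma_{11}=1$, $\gamma_{12}=0$, $\gamma_{21}=u_2-\frac{12}{5}u^2+\frac{6}{5}v^2$, $\gamma_{22}=-\frac{6}{5}v^2+\frac{12}{5}uv-3v_2$. *)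

(* Defs.v *)
From Stdlib Require Import Reals Lra.
Open Scope R_scope.

(** Differential polynomials in two dependent variables u, v (x-independent),
    as syntax trees; [U i] is u_i = d^i u/dx^i, [V j] is v_j. *)
Inductive dexp : Type :=
| C : R -> dexp
| U : nat -> dexp
| V : nat -> dexp
| Add : dexp -> dexp -> dexp
| Mul : dexp -> dexp -> dexp.

Definition Opp (a : dexp) : dexp := Mul (C (-1)) a.
Definition Sub (a b : dexp) : dexp := Add a (Opp b).

Declare Scope dexp_scope.
Delimit Scope dexp_scope with D.
Infix "+" := Add : dexp_scope.
Infix "-" := Sub : dexp_scope.
Infix "*" := Mul : dexp_scope.
Notation "- a" := (Opp a) : dexp_scope.

Fixpoint eval (uu vv : nat -> R) (e : dexp) : R :=
  match e with
  | C r => r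
  | U i => uu i
  | V j => vv j
  | Add a b => eval uu vv a + eval uu vv b
  | Mul a b => eval uu vv a * eval uu vv b
  end.

(** Equality of differential polynomials (as functions on the jet space;
    over R this is the same as equality of polynomials). *)
Definition deq (a b : dexp) : Prop := forall uu vv : nat -> R, eval uu vv a = eval uu vv b.

Fixpoint Dx (e : dexp) : dexp :=
  match e with
  | C _ => C 0
  | U i => U (S i)
  | V j => V (S j)
  | Add a b => Add (Dx a) (Dx b)
  | Mul a b => Add (Mul (Dx a) b) (Mul a (Dx b))
  end.

Fixpoint Dxn (n : nat) (e : dexp) : dexp :=
  match n with O => e | S k => Dx (Dxn k e) end.

Fixpoint dU (n : nat) (e : dexp) : dexp :=
  match e with
  | C _ => C 0
  | U i => if Nat.eqb i n then C 1 else C 0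
  | V _ => C 0
  | Add a b => Add (dU n a) (dU n b)
  | Mul a b => Add (Mul (dU n a) b) (Mul a (dU n b))
  end.

Fixpoint dV (n : nat) (e : dexp) : dexp :=
  match e with
  | C _ => C 0
  | U _ => C 0
  | V j => if Nat.eqb j n then C 1 else C 0
  | Add a b => Add (dV n a) (dV n b)
  | Mul a b => Add (Mul (dV n a) b) (Mul a (dV n b))
  end.

Fixpoint ord (e : dexp) : nat :=
  match e with
  | C _ => O
  | U i => i
  | V j => j
  | Add a b => Nat.max (ord a) (ord b)
  | Mul a b => Nat.max (ord a) (ord b)
  end.

Fixpoint dsum (N : nat) (f : nat -> dexp) : dexp :=
  match N with
  | O => f O
  | S k => Add (dsum k f) (f (S k))
  end.

Definition frechet1 (G K1 K2 : dexp) : dexp :=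
  dsum (ord G) (fun i => Add (Mul (dU i G) (Dxn i K1)) (Mul (dV i G) (Dxn i K2))).

Definition vec := (dexp * dexp)%type.

Definition frechet (G K : vec) : vec :=
  (frechet1 (fst G) (fst K) (snd K), frechet1 (snd G) (fst K) (snd K)).

Definition vdeq (a b : vec) : Prop := deq (fst a) (fst b) /\ deq (snd a) (snd b).

Definition u (i : nat) := U i.
Definition v (j : nat) := V j.

Definition MNW_F1 : dexp :=
  (C (-5/3) * u 5 - C 10 * v 0 * v 3 - C 15 * v 1 * v 2 + C 10 * u 0 * u 3
   + C 25 * u 1 * u 2 - C 6 * v 0 * v 0 * v 1 + C 6 * v 0 * v 0 * u 1
   + C 12 * u 0 * v 0 * v 1 - C 12 * u 0 * u 0 * u 1)%D.

Definition MNW_F2 : dexp :=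
  (C 15 * v 5 + C 30 * v 1 * v 2 - C 30 * v 3 * u 0 - C 45 * v 2 * u 1
   - C 35 * v 1 * u 2 - C 10 * v 0 * u 3 - C 6 * v 0 * v 0 * v 1
   + C 6 * v 0 * v 0 * u 1 + C 12 * u 0 * u 0 * v 1 + C 12 * v 0 * u 0 * u 1)%D.

Definition MNW_F : vec := (MNW_F1, MNW_F2).

(** Generalized symmetry: D_t Q = F'[Q] on solutions.  On solutions of the
    evolution system u_t = F1, v_t = F2 (with Q not depending explicitly on
    x, t), D_t Q = Q'[F]. *)
Definition is_gen_symmetry (Q : vec) : Prop :=
  vdeq (frechet Q MNW_F) (frechet MNW_F Q).

(** Formal inverse of D_x: [A] is D_x^{-1} f, i.e. D_x A = f, normalised
    with zero integration constant (A vanishes at the zero jet). *)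
Definition is_Dxinv (A f : dexp) : Prop :=
  deq (Dx A) f /\ eval (fun _ => 0) (fun _ => 0) A = 0.

Definition gam11 : dexp := C 1.
Definition gam12 : dexp := C 0.
Definition gam21 : dexp := (u 2 - C (12/5) * u 0 * u 0 + C (6/5) * v 0 * v 0)%D.
Definition gam22 : dexp := (- (C (6/5) * v 0 * v 0) + C (12/5) * u 0 * v 0 - C 3 * v 2)%D.

(** Action of the operator S on Q = (Q1,Q2), where A = D_x^{-1}(gam11 Q1 + gam12 Q2)
    and B = D_x^{-1}(gam21 Q1 + gam22 Q2). *)
Definition S_app (Q : vec) (A B : dexp) : vec :=
  let q1 := fst Q in let q2 := snd Q in
  ( (- Dxn 3 q1 + C 6 * u 0 * Dx q1 + C 3 * u 1 * q1
     + (- (C 6 * v 0 * Dx q2) + C 3 * v 1 * q2)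
     + C (6/5) * gam21 * A + C (6/5) * B)%D,
    (- (C 6 * v 0 * Dx q1) - C 9 * v 1 * q1
     + (C 9 * Dxn 3 q2 - (C (54/5) * u 0 - C (36/5) * v 0) * Dx q2
        - C (27/5) * u 1 * q2 + C (18/5) * v 1 * q2)
     + C (6/5) * gam22 * A)%D ).

Definition P_app (W : vec) : vec :=
  let w1 := fst W in let w2 := snd W in
  ( (Dxn 3 w1 - C (6/5) * u 0 * Dx w1 - C (3/5) * u 1 * w1
     - C (6/5) * v 0 * Dx w2 - C (3/5) * v 1 * w2)%D,
    (- (C (6/5) * v 0 * Dx w1) - C (3/5) * v 1 * w1
     + C 3 * Dxn 3 w2 - (C (18/5) * u 0 + C (12/5) * v 0) * Dx w2
     - C (9/5) * u 1 * w2 - C (6/5) * v 1 * w2)%D ).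

(** [R_app Q W]: W = R(Q) = P(S(Q)), where the nonlocal terms D_x^{-1}(...)
    exist (as differential polynomials) and are normalised as above. *)
Definition R_app (Q W : vec) : Prop :=
  exists A B : dexp,
    is_Dxinv A (gam11 * fst Q + gam12 * snd Q)%D /\
    is_Dxinv B (gam21 * fst Q + gam22 * snd Q)%D /\
    vdeq (P_app (S_app Q A B)) W.

Definition Q_1 : vec := (u 1, v 1).

Definition Q11_1 : dexp :=
  (u 7 - C (42/5) * u 0 * u 5 + C (126/5) * u 1 * u 1 * u 1
   - C (126/5) * u 1 * v 1 * v 1 - C (147/5) * u 1 * u 4
   - C (1386/25) * v 2 * u 1 * v 0 + C (2268/25) * u 0 * u 1 * u 2
   + C (1512/125) * u 0 * v 0 * v 0 * u 1 - C (2016/125) * u 0 * u 0 * u 0 * u 1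
   - C (252/125) * v 0 * v 0 * v 0 * u 1 + C (1512/125) * v 1 * v 0 * u 0 * u 0
   + C (504/25) * u 0 * u 0 * u 3 - C (756/25) * u 0 * v 0 * v 3
   - C (756/125) * v 0 * v 0 * u 0 * v 1 - C (756/25) * u 0 * v 1 * v 2
   + C (252/25) * v 0 * v 0 * v 3 + C (84/5) * v 2 * v 3 + C 21 * v 1 * v 4
   + C (84/5) * v 0 * v 5 - C (252/5) * u 2 * u 3 - C (252/25) * v 0 * v 0 * u 3
   + C (126/25) * v 1 * v 1 * v 1 - C (1134/25) * v 1 * u 2 * v 0
   + C (756/25) * v 0 * v 1 * v 2)%D.

Definition Q11_2 : dexp :=
  (- (C 27 * v 7) - C (756/25) * v 2 * u 1 * v 0 + C (252/25) * v 0 * v 0 * v 3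
   + C (126/25) * v 1 * v 1 * v 1 + C 189 * v 4 * u 1 + C (483/5) * u 4 * v 1
   - C (378/5) * u 1 * u 1 * v 1 + C (1386/5) * u 2 * v 3 - C (756/5) * v 2 * v 3
   - C (252/125) * v 0 * v 0 * v 0 * v 1 - C (756/25) * u 0 * v 0 * u 3
   - C (756/25) * v 1 * u 2 * v 0 + C (1512/25) * u 0 * v 1 * v 2
   + C (882/25) * v 0 * v 1 * v 2 - C (1134/25) * u 1 * v 0 * u 2
   + C (378/25) * u 1 * v 1 * v 1 + C (378/5) * v 5 * u 0
   - C (252/25) * v 0 * v 0 * u 3 - C (3024/25) * u 2 * u 0 * v 1
   - C (378/5) * v 1 * v 4 - C (4536/25) * v 2 * u 1 * u 0
   + C (1008/125) * u 0 * u 0 * u 0 * v 1 + C (756/125) * u 0 * v 0 * v 0 * u 1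
   - C (1512/25) * u 0 * u 0 * v 3 + C (1134/5) * u 3 * v 2
   + C (1512/125) * u 0 * u 0 * u 1 * v 0 + C (84/5) * u 5 * v 0)%D.

Definition Q11 : vec := (Q11_1, Q11_2).

Definition vopp (a : vec) : vec := (Opp (fst a), Opp (snd a)).

(* Main.v *)
From Pilot Require Import Defs.
From Stdlib Require Import Reals QArith Qreals Ring_polynom Lia Lra.
Import Pilot.Defs.
Open Scope R_scope.

Inductive qe : Type :=
| qC : Q -> qe | qU : nat -> qe | qV : nat -> qe
| qAdd : qe -> qe -> qe | qMul : qe -> qe -> qe.

Fixpoint toD (e : qe) : dexp :=
  match e with
  | qC q => C (Q2R q) | qU i => U i | qV j => V j
  | qAdd a b => Add (toD a) (toD b) | qMul a b => Mul (toD a) (toD b)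
  end.

Fixpoint qDx (e : qe) : qe :=
  match e with
  | qC _ => qC 0%Q | qU i => qU (S i) | qV j => qV (S j)
  | qAdd a b => qAdd (qDx a) (qDx b)
  | qMul a b => qAdd (qMul (qDx a) b) (qMul a (qDx b))
  end.
Fixpoint qDxn (n : nat) (e : qe) : qe :=
  match n with O => e | S k => qDx (qDxn k e) end.
Fixpoint qdU (n : nat) (e : qe) : qe :=
  match e with
  | qC _ => qC 0%Q
  | qU i => if Nat.eqb i n then qC 1%Q else qC 0%Q
  | qV _ => qC 0%Q
  | qAdd a b => qAdd (qdU n a) (qdU n b)
  | qMul a b => qAdd (qMul (qdU n a) b) (qMul a (qdU n b))
  end.
Fixpoint qdV (n : nat) (e : qe) : qe :=
  match e with
  | qC _ => qC 0%Q
  | qU _ => qC 0%Q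
  | qV j => if Nat.eqb j n then qC 1%Q else qC 0%Q
  | qAdd a b => qAdd (qdV n a) (qdV n b)
  | qMul a b => qAdd (qMul (qdV n a) b) (qMul a (qdV n b))
  end.
Fixpoint qord (e : qe) : nat :=
  match e with
  | qC _ => O | qU i => i | qV j => j
  | qAdd a b => Nat.max (qord a) (qord b)
  | qMul a b => Nat.max (qord a) (qord b)
  end.
Fixpoint qdsum (N : nat) (f : nat -> qe) : qe :=
  match N with O => f O | S k => qAdd (qdsum k f) (f (S k)) end.
Definition qfrechet1 (G K1 K2 : qe) : qe :=
  qdsum (qord G) (fun i => qAdd (qMul (qdU i G) (qDxn i K1)) (qMul (qdV i G) (qDxn i K2))).

Lemma Q2R0 : Q2R 0%Q = 0. Proof. unfold Q2R; simpl; lra. Qed.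
Lemma Q2R1 : Q2R 1%Q = 1. Proof. unfold Q2R; simpl; lra. Qed.

Lemma Dx_toD e : Dx (toD e) = toD (qDx e).
Proof. induction e; simpl; rewrite ?IHe1, ?IHe2, ?Q2R0; auto. Qed.
Lemma Dxn_toD n e : Dxn n (toD e) = toD (qDxn n e).
Proof. induction n; simpl; rewrite ?IHn, ?Dx_toD; auto. Qed.
Lemma dU_toD n e : dU n (toD e) = toD (qdU n e).
Proof. induction e; simpl; rewrite ?IHe1, ?IHe2, ?Q2R0; auto.
  destruct (Nat.eqb n0 n); simpl; rewrite ?Q2R0, ?Q2R1; auto. Qed.
Lemma dV_toD n e : dV n (toD e) = toD (qdV n e).
Proof. induction e; simpl; rewrite ?IHe1, ?IHe2, ?Q2R0; auto.
  destruct (Nat.eqb n0 n); simpl; rewrite ?Q2R0, ?Q2R1; auto. Qed.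
Lemma ord_toD e : ord (toD e) = qord e.
Proof. induction e; simpl; auto. Qed.
Lemma dsum_toD N f : dsum N (fun i => toD (f i)) = toD (qdsum N f).
Proof. induction N; simpl; rewrite ?IHN; auto. Qed.
Lemma dsum_ext N f g : (forall i, f i = g i) -> dsum N f = dsum N g.
Proof. intros H; induction N; simpl; rewrite ?IHN, ?H; auto. Qed.
Lemma frechet1_toD G K1 K2 :
  frechet1 (toD G) (toD K1) (toD K2) = toD (qfrechet1 G K1 K2).
Proof.
  unfold frechet1, qfrechet1. rewrite ord_toD, <- dsum_toD.
  apply dsum_ext; intro i. simpl.
  rewrite dU_toD, dV_toD, !Dxn_toD. reflexivity.
Qed.

Definition qadd (a b : Q) : Q := Qred (a + b).
Definition qmul (a b : Q) : Q := Qred (a * b).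
Definition qsub (a b : Q) : Q := Qred (a - b).
Definition qopp (a : Q) : Q := Qred (- a).

Lemma Q2R_red q : Q2R (Qred q) = Q2R q.
Proof. apply Qeq_eqR, Qred_correct. Qed.

Lemma qmorph : ring_morph 0 1 Rplus Rmult Rminus Ropp eq 0%Q 1%Q qadd qmul qsub qopp Qeq_bool Q2R.
Proof.
  constructor.
  - apply Q2R0. - apply Q2R1.
  - intros; unfold qadd; rewrite Q2R_red; apply Q2R_plus.
  - intros; unfold qsub; rewrite Q2R_red; apply Q2R_minus.
  - intros; unfold qmul; rewrite Q2R_red; apply Q2R_mult.
  - intros; unfold qopp; rewrite Q2R_red; apply Q2R_opp.
  - intros x y H; apply Qeq_eqR, Qeq_bool_eq, H.
Qed.

Definition qdiv (a b : Q) : Q * Q := (0%Q, a).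
Lemma qdiv_th : div_theory eq qadd qmul Q2R qdiv.
Proof. constructor; intros a b; simpl. unfold qadd, qmul; repeat rewrite ?Q2R_red, ?Q2R_plus, ?Q2R_mult, ?Q2R0. ring. Qed.

Lemma Req_equiv : Equivalence (@eq R).
Proof. apply eq_equivalence. Qed.
Lemma Reqe : ring_eq_ext Rplus Rmult Ropp (@eq R).
Proof. constructor; repeat intro; subst; reflexivity. Qed.

Fixpoint rf (e : qe) : PExpr Q :=
  match e with
  | qC q => PEc q
  | qU i => PEX _ (Pos.of_succ_nat (2 * i))
  | qV i => PEX _ (Pos.of_succ_nat (2 * i + 1))
  | qAdd a b => PEadd (rf a) (rf b)
  | qMul a b => PEmul (rf a) (rf b)
  end.

Definition KK := 13%nat.
Fixpoint mkl (uu vv : nat -> R) (n : nat) (k : nat) : list R :=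
  match n with O => nil | S m => uu k :: vv k :: mkl uu vv m (S k) end.
Definition lst uu vv := mkl uu vv KK 0.

Definition PEv (l : list R) (p : PExpr Q) : R :=
  PEeval 0 1 Rplus Rmult Rminus Ropp Q2R id_phi_N (pow_N 1 Rmult) l p.

Lemma lst_U uu vv i : (i <= 12)%nat ->
  BinList.nth 0 (Pos.of_succ_nat (2 * i)) (lst uu vv) = uu i.
Proof.
  intro H. do 13 (destruct i as [|i]; [reflexivity|]). lia.
Qed.
Lemma lst_V uu vv i : (i <= 12)%nat ->
  BinList.nth 0 (Pos.of_succ_nat (2 * i + 1)) (lst uu vv) = vv i.
Proof.
  intro H. do 13 (destruct i as [|i]; [reflexivity|]). lia.
Qed.

Lemma rf_ok uu vv e : (qord e <= 12)%nat -> eval uu vv (toD e) = PEv (lst uu vv) (rf e).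
Proof.
  induction e; cbn [toD eval rf qord]; intro H.
  - reflexivity.
  - unfold PEv; cbn [PEeval]. rewrite lst_U; auto.
  - unfold PEv; cbn [PEeval]. rewrite lst_V; auto.
  - rewrite IHe1, IHe2 by lia. reflexivity.
  - rewrite IHe1, IHe2 by lia. reflexivity.
Qed.

Definition qcheck (a b : qe) : bool :=
  Nat.leb (qord a) 12 && Nat.leb (qord b) 12 &&
  Peq Qeq_bool (norm_subst 0%Q 1%Q qadd qmul qsub qopp Qeq_bool qdiv 0 nil (rf a))
               (norm_subst 0%Q 1%Q qadd qmul qsub qopp Qeq_bool qdiv 0 nil (rf b)).

Lemma qcheck_ok a b : qcheck a b = true -> deq (toD a) (toD b).
Proof.
  unfold qcheck; intros H uu vv.
  apply andb_prop in H as [H H3]. apply andb_prop in H as [H1 H2].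
  apply Nat.leb_le in H1, H2.
  rewrite !rf_ok by auto.
  unfold PEv.
  refine (ring_correct Req_equiv Reqe (Rth_ARth Req_equiv Reqe RTheory) qmorph
     (pow_N_th 1 Rmult Req_equiv) qdiv_th 0 (lst uu vv) nil (rf a) (rf b) I _).
  exact H3.
Qed.

Arguments qC _%_Q.
Definition qOpp (a : qe) : qe := qMul (qC (-1#1)) a.
Definition qSub (a b : qe) : qe := qAdd a (qOpp b).
Declare Scope qe_scope.
Delimit Scope qe_scope with Q_E.
Infix "+" := qAdd : qe_scope.
Infix "-" := qSub : qe_scope.
Infix "*" := qMul : qe_scope.
Notation "- a" := (qOpp a) : qe_scope.

Ltac st := cbn [toD]; unfold Sub, Opp, qSub, qOpp, u, v; cbn [toD];
  repeat match goal with
  | |- (_,_) = (_,_) => f_equal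
  | |- Add _ _ = Add _ _ => f_equal
  | |- Mul _ _ = Mul _ _ => f_equal
  | |- C _ = C _ => f_equal; unfold Q2R; simpl; lra
  end.
Definition qMNW_F1 : qe :=
  (qC (-5#3) * qU 5 - qC (10#1) * qV 0 * qV 3 - qC (15#1) * qV 1 * qV 2 + qC (10#1) * qU 0 * qU 3
   + qC (25#1) * qU 1 * qU 2 - qC (6#1) * qV 0 * qV 0 * qV 1 + qC (6#1) * qV 0 * qV 0 * qU 1
   + qC (12#1) * qU 0 * qV 0 * qV 1 - qC (12#1) * qU 0 * qU 0 * qU 1)%Q_E.

Definition qMNW_F2 : qe :=
  (qC (15#1) * qV 5 + qC (30#1) * qV 1 * qV 2 - qC (30#1) * qV 3 * qU 0 - qC (45#1) * qV 2 * qU 1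
   - qC (35#1) * qV 1 * qU 2 - qC (10#1) * qV 0 * qU 3 - qC (6#1) * qV 0 * qV 0 * qV 1
   + qC (6#1) * qV 0 * qV 0 * qU 1 + qC (12#1) * qU 0 * qU 0 * qV 1 + qC (12#1) * qV 0 * qU 0 * qU 1)%Q_E.

Definition qQ11_1 : qe :=
  (qU 7 - qC (42#5) * qU 0 * qU 5 + qC (126#5) * qU 1 * qU 1 * qU 1
   - qC (126#5) * qU 1 * qV 1 * qV 1 - qC (147#5) * qU 1 * qU 4
   - qC (1386#25) * qV 2 * qU 1 * qV 0 + qC (2268#25) * qU 0 * qU 1 * qU 2
   + qC (1512#125) * qU 0 * qV 0 * qV 0 * qU 1 - qC (2016#125) * qU 0 * qU 0 * qU 0 * qU 1
   - qC (252#125) * qV 0 * qV 0 * qV 0 * qU 1 + qC (1512#125) * qV 1 * qV 0 * qU 0 * qU 0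
   + qC (504#25) * qU 0 * qU 0 * qU 3 - qC (756#25) * qU 0 * qV 0 * qV 3
   - qC (756#125) * qV 0 * qV 0 * qU 0 * qV 1 - qC (756#25) * qU 0 * qV 1 * qV 2
   + qC (252#25) * qV 0 * qV 0 * qV 3 + qC (84#5) * qV 2 * qV 3 + qC (21#1) * qV 1 * qV 4
   + qC (84#5) * qV 0 * qV 5 - qC (252#5) * qU 2 * qU 3 - qC (252#25) * qV 0 * qV 0 * qU 3
   + qC (126#25) * qV 1 * qV 1 * qV 1 - qC (1134#25) * qV 1 * qU 2 * qV 0
   + qC (756#25) * qV 0 * qV 1 * qV 2)%Q_E.

Definition qQ11_2 : qe :=
  (- (qC (27#1) * qV 7) - qC (756#25) * qV 2 * qU 1 * qV 0 + qC (252#25) * qV 0 * qV 0 * qV 3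
   + qC (126#25) * qV 1 * qV 1 * qV 1 + qC (189#1) * qV 4 * qU 1 + qC (483#5) * qU 4 * qV 1
   - qC (378#5) * qU 1 * qU 1 * qV 1 + qC (1386#5) * qU 2 * qV 3 - qC (756#5) * qV 2 * qV 3
   - qC (252#125) * qV 0 * qV 0 * qV 0 * qV 1 - qC (756#25) * qU 0 * qV 0 * qU 3
   - qC (756#25) * qV 1 * qU 2 * qV 0 + qC (1512#25) * qU 0 * qV 1 * qV 2
   + qC (882#25) * qV 0 * qV 1 * qV 2 - qC (1134#25) * qU 1 * qV 0 * qU 2
   + qC (378#25) * qU 1 * qV 1 * qV 1 + qC (378#5) * qV 5 * qU 0
   - qC (252#25) * qV 0 * qV 0 * qU 3 - qC (3024#25) * qU 2 * qU 0 * qV 1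
   - qC (378#5) * qV 1 * qV 4 - qC (4536#25) * qV 2 * qU 1 * qU 0
   + qC (1008#125) * qU 0 * qU 0 * qU 0 * qV 1 + qC (756#125) * qU 0 * qV 0 * qV 0 * qU 1
   - qC (1512#25) * qU 0 * qU 0 * qV 3 + qC (1134#5) * qU 3 * qV 2
   + qC (1512#125) * qU 0 * qU 0 * qU 1 * qV 0 + qC (84#5) * qU 5 * qV 0)%Q_E.

Lemma F1_eq : toD qMNW_F1 = MNW_F1. Proof. unfold qMNW_F1, MNW_F1. st. Qed.
Lemma F2_eq : toD qMNW_F2 = MNW_F2. Proof. unfold qMNW_F2, MNW_F2. st. Qed.
Lemma Q1_eq : toD qQ11_1 = Q11_1. Proof. unfold qQ11_1, Q11_1. st. Qed.
Lemma Q2_eq : toD qQ11_2 = Q11_2. Proof. unfold qQ11_2, Q11_2. st. Qed.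

Lemma sym : is_gen_symmetry Q11.
Proof.
  unfold is_gen_symmetry, Q11, MNW_F, frechet, vdeq; cbn [fst snd].
  rewrite <- F1_eq, <- F2_eq, <- Q1_eq, <- Q2_eq, !frechet1_toD.
  split; apply qcheck_ok; vm_compute; reflexivity.
Qed.
Definition qgam21 : qe := (qU 2 - qC (12#5) * qU 0 * qU 0 + qC (6#5) * qV 0 * qV 0)%Q_E.
Definition qgam22 : qe := (- (qC (6#5) * qV 0 * qV 0) + qC (12#5) * qU 0 * qV 0 - qC (3#1) * qV 2)%Q_E.
Definition qS_app (Q : qe * qe) (A B : qe) : qe * qe :=
  let q1 := fst Q in let q2 := snd Q in
  ( (- qDxn 3 q1 + qC (6#1) * qU 0 * qDx q1 + qC (3#1) * qU 1 * q1
     + (- (qC (6#1) * qV 0 * qDx q2) + qC (3#1) * qV 1 * q2)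
     + qC (6#5) * qgam21 * A + qC (6#5) * B)%Q_E,
    (- (qC (6#1) * qV 0 * qDx q1) - qC (9#1) * qV 1 * q1
     + (qC (9#1) * qDxn 3 q2 - (qC (54#5) * qU 0 - qC (36#5) * qV 0) * qDx q2
        - qC (27#5) * qU 1 * q2 + qC (18#5) * qV 1 * q2)
     + qC (6#5) * qgam22 * A)%Q_E ).
Definition qP_app (W : qe * qe) : qe * qe :=
  let w1 := fst W in let w2 := snd W in
  ( (qDxn 3 w1 - qC (6#5) * qU 0 * qDx w1 - qC (3#5) * qU 1 * w1
     - qC (6#5) * qV 0 * qDx w2 - qC (3#5) * qV 1 * w2)%Q_E,
    (- (qC (6#5) * qV 0 * qDx w1) - qC (3#5) * qV 1 * w1
     + qC (3#1) * qDxn 3 w2 - (qC (18#5) * qU 0 + qC (12#5) * qV 0) * qDx w2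
     - qC (9#5) * qU 1 * w2 - qC (6#5) * qV 1 * w2)%Q_E ).

Lemma S_lem a b A B : S_app (toD a, toD b) (toD A) (toD B) =
  (toD (fst (qS_app (a, b) A B)), toD (snd (qS_app (a, b) A B))).
Proof.
  unfold S_app, qS_app, gam21, gam22, qgam21, qgam22; cbn [fst snd].
  rewrite !Dx_toD, !Dxn_toD. st.
Qed.
Lemma P_lem a b : P_app (toD a, toD b) =
  (toD (fst (qP_app (a, b))), toD (snd (qP_app (a, b)))).
Proof.
  unfold P_app, qP_app; cbn [fst snd].
  rewrite !Dx_toD, !Dxn_toD. st.
Qed.

Definition qB : qe := (qC (1#2) * qU 1 * qU 1 - qC (4#5) * qU 0 * qU 0 * qU 0
  + qC (6#5) * qU 0 * qV 0 * qV 0 - qC (2#5) * qV 0 * qV 0 * qV 0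
  - qC (3#2) * qV 1 * qV 1)%Q_E.

Lemma Ropp_toD a uu vv : eval uu vv (toD (qOpp a)) = eval uu vv (Opp (toD a)).
Proof. simpl. f_equal. unfold Q2R; simpl; lra. Qed.

Lemma Rpart : R_app Q_1 (vopp Q11).
Proof.
  exists (U 0), (toD qB). split; [|split].
  - split; [intros uu vv; simpl; ring | reflexivity].
  - split.
    + intros uu vv. unfold gam21, gam22, gam11, gam12, Q_1, u, v, Sub, Opp; simpl.
      unfold Q2R; simpl. field.
    + simpl. unfold Q2R; simpl. field.
  - change Q_1 with (toD (qU 1), toD (qV 1)). change (U 0) with (toD (qU 0)).
    rewrite S_lem, P_lem. unfold vopp, Q11, vdeq; cbn [fst snd].
    rewrite <- Q1_eq, <- Q2_eq. split; intros uu vv; rewrite <- Ropp_toD;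
    revert uu vv; apply qcheck_ok; vm_compute; reflexivity.
Qed.

Theorem mainTheorem6 :
  is_gen_symmetry Q11 /\ R_app Q_1 (vopp Q11).
Proof. split; [exact sym | exact Rpart]. Qed.
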